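(* Let $m\geq 2$ be an integer and let $\delta$ be a real number with $0\leq\delta\leq \frac{1}{4m}\left(1-\frac{2}{2^m-1}\right)$. Then there exists a sequence of binary $[[n_i,k_i,d_i]]$ stabilizer codes such that $\lim_{i\to\infty}n_i=\infty$, $$\liminf_{i\to\infty}\frac{k_i}{n_i}\geq R_m^{(1)}(\delta):=1-\frac{2}{2^m-1}-4m\delta,\qquad \liminf_{i\to\infty}\frac{d_i}{n_i}\geq\delta.$$
   Context: A binary $[[n,k,d]]$ stabilizer code is given by an $(n+k)$-dimensional subspace $C\subseteq\mathbf{F}_2^{2n}$ with $C^{\perp\mathrm s}\subseteq C$, where $\langle\vec x,\vec y\rangle_{\mathrm s}=\sum_{i=1}^n x_iy_{n+i}-\sum_{i=1}^n x_{n+i}y_i$ and $C^{\perp\mathrm s}$ is the orthogonal complement of $C$ with respect to this form; its minimum distance $d$ is $\min\{w(\vec x)\mid \vec x\in C\setminus C^{\perp\mathrm s}\}$ with $w(\vec x)=\#\{1\le i\le n\mid (x_i,x_{n+i})\neq(0,0)\}$. *)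

(* Defs.v *)
From HB Require Import structures.
From mathcomp Require Import all_boot all_order all_algebra.
From mathcomp Require Import all_classical all_reals all_analysis.
Set Implicit Arguments. Unset Strict Implicit. Unset Printing Implicit Defensive.
Import Order.TTheory GRing.Theory Num.Theory.
Local Open Scope ring_scope.

(* Vectors of F_2^{2n} are row vectors 'rV['F_2]_(n + n); coordinate i of
   the "X-part" is x 0 (lshift n i), coordinate n+i is x 0 (rshift n i). *)
Notation F2 := 'F_2.

Definition symp {n : nat} (x y : 'rV[F2]_(n + n)) : F2 :=
  \sum_(i < n) (x 0 (lshift n i) * y 0 (rshift n i)
                - x 0 (rshift n i) * y 0 (lshift n i)).

Definition in_symp_compl {n : nat} (C : {vspace 'rV[F2]_(n + n)})
    (y : 'rV[F2]_(n + n)) : Prop :=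
  forall x, x \in C -> symp x y = 0.

Definition sweight {n : nat} (x : 'rV[F2]_(n + n)) : nat :=
  #|[set i : 'I_n | (x 0 (lshift n i) != 0) || (x 0 (rshift n i) != 0)]|.

Definition is_stabilizer_code (n k d : nat) (C : {vspace 'rV[F2]_(n + n)}) : Prop :=
  [/\ \dim C = (n + k)%N,
      (forall y, in_symp_compl C y -> y \in C),
      (exists2 x, (x \in C /\ ~ in_symp_compl C x) & sweight x = d) &
      (forall x, x \in C -> ~ in_symp_compl C x -> leq d (sweight x))].

Definition stabilizer_code_exists (n k d : nat) : Prop :=
  exists C : {vspace 'rV[F2]_(n + n)}, @is_stabilizer_code n k d C.

(* Main.v *)
Require Import Defs.
From HB Require Import structures.
From mathcomp Require Import all_boot all_order all_algebra.
From mathcomp Require Import all_classical all_reals all_analysis.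
From mathcomp Require Import zify ring lra.
From Stdlib Require Import Lia.
Import Order.TTheory GRing.Theory Num.Theory.

Module M_PartA.
Set Implicit Arguments. Unset Strict Implicit. Unset Printing Implicit Defensive.
Local Open Scope ring_scope.

Lemma F2_nz (x : F2) : x != 0 -> x = 1.
Proof. by case: x => [[|[|i]]] //= Hi _; apply: val_inj. Qed.

Lemma F2_add_self (x : F2) : x + x = 0.
Proof. by case: x => [[|[|i]]] //= Hi; apply: val_inj. Qed.

Lemma F2_opp (x : F2) : - x = x.
Proof. by apply/eqP; rewrite eq_sym -subr_eq0 opprK F2_add_self. Qed.

Lemma F2_cases (x : F2) : x = 0 \/ x = 1.
Proof. by case: (eqVneq x 0) => [->|/F2_nz ->]; [left|right]. Qed.

Definition wt {n} (y : 'rV[F2]_n) : nat := #|[set j | y 0 j != 0]|.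

Lemma dd n u (U : 'M[F2]_(u, n)) (p : 'rV[F2]_n) :
  (forall y : 'rV_n, y *m U^T = 0 -> y *m p^T = 0) -> (p <= U)%MS.
Proof.
move=> H.
set K := kermx U^T.
have KU : K *m U^T = 0 := mulmx_ker _.
have Kp : K *m p^T = 0.
  apply/row_matrixP => i; rewrite row_mul row0; apply: H.
  by rewrite -row_mul KU row0.
have pK : (p <= kermx K^T)%MS by rewrite sub_kermx -[p]trmxK -trmx_mul Kp trmx0.
have UK : (U <= kermx K^T)%MS by rewrite sub_kermx -[U]trmxK -trmx_mul KU trmx0.
have rk : \rank (kermx K^T) = \rank U.
  rewrite mxrank_ker mxrank_tr /K mxrank_ker mxrank_tr subKn //.
  exact: rank_leq_col.
have := mxrank_leqif_sup UK; rewrite rk => -[_ /esym]; rewrite eqxx => KsU.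
exact: submx_trans pK KsU.
Qed.

Lemma symp0r n (x : 'rV[F2]_(n+n)) : symp x 0 = 0.
Proof. by rewrite /symp big1 // => i _; rewrite !mxE !mulr0 subrr. Qed.

Lemma sweight_le n (x : 'rV[F2]_(n+n)) : (sweight x <= n)%N.
Proof. by rewrite /sweight -[X in (_ <= X)%N]card_ord max_card. Qed.

Lemma mk_code n (C : {vspace 'rV[F2]_(n+n)}) kk t :
  \dim C = (n + kk)%N -> (forall y, in_symp_compl C y -> y \in C) ->
  (exists x, x \in C /\ ~ in_symp_compl C x) ->
  (forall x, x \in C -> x != 0 -> (t < sweight x)%N) ->
  exists d, @is_stabilizer_code n kk d C /\ (t < d)%N /\ (d <= n)%N.
Proof.
move=> dC sC [x0 [Cx0 nx0]] wC.
pose P := fun d => `[< exists x, (x \in C /\ ~ in_symp_compl C x) /\ sweight x = d >].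
have exP : exists d, P d by exists (sweight x0); apply/asboolP; exists x0.
case: (ex_minnP exP) => d /asboolP [x [[Cx nx] wx]] mind.
have nz : forall y, ~ in_symp_compl C y -> y != 0.
  by move=> y ny; apply/eqP => y0; apply: ny => z _; rewrite y0 symp0r.
exists d; split; last split.
- split => //.
  + by exists x.
  + move=> y Cy ny; apply: mind; apply/asboolP; exists y; split => //.
- by rewrite -wx; apply: wC => //; exact: nz.
- by rewrite -wx sweight_le.
Qed.

Section Code.
Variables (n u k : nat) (G : 'M[F2]_(u + k, n)).
Definition UU := usubmx G.
Definition fA : 'Hom('rV[F2]_(u+k), 'rV[F2]_n) := linfun (mulmxr G).
Definition Asp := (fA @: fullv)%VS.
Definition fB : 'Hom('rV[F2]_n, 'rV[F2]_u) := linfun (mulmxr UU^T).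
Definition Bsp := lker fB.
Definition eL : 'Hom('rV[F2]_n, 'rV[F2]_(n+n)) := linfun (mulmxr (row_mx 1%:M 0)).
Definition eR : 'Hom('rV[F2]_n, 'rV[F2]_(n+n)) := linfun (mulmxr (row_mx 0 1%:M)).
Definition Csp := (eL @: Asp + eR @: Bsp)%VS.

Lemma memA x : reflect (exists c, x = c *m G) (x \in Asp).
Proof.
apply: (iffP memv_imgP) => [[c _ ->]|[c ->]]; exists c; rewrite ?memvf //.
  by rewrite lfunE.
by rewrite lfunE.
Qed.

Lemma memB y : (y \in Bsp) = (y *m UU^T == 0).
Proof. by rewrite memv_ker lfunE. Qed.

Lemma eLE x : eL x = row_mx x 0.
Proof. by rewrite lfunE /= mul_mx_row mulmx1 mulmx0. Qed.
Lemma eRE x : eR x = row_mx 0 x.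
Proof. by rewrite lfunE /= mul_mx_row mulmx1 mulmx0. Qed.

Lemma memC v : reflect (exists x y, [/\ x \in Asp, y \in Bsp & v = row_mx x y]) (v \in Csp).
Proof.
apply: (iffP memv_addP) => [[a /memv_imgP[x Ax ->] [b /memv_imgP[y By ->] ->]]|[x [y [Ax By ->]]]].
  by exists x, y; split => //; rewrite eLE eRE add_row_mx addr0 add0r.
exists (eL x); first exact: memv_img.
exists (eR y); first exact: memv_img.
by rewrite eLE eRE add_row_mx addr0 add0r.
Qed.

Lemma symp_row (x y p q : 'rV[F2]_n) :
  symp (row_mx x y) (row_mx p q) = (x *m q^T) 0 0 - (y *m p^T) 0 0.
Proof.
rewrite /symp sumrB !mxE; congr (_ + - _); apply: eq_bigr => i _;
by rewrite ?row_mxEl ?row_mxEr mxE.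
Qed.

Lemma dot1 m (y p : 'rV[F2]_m) : (y *m p^T) 0 0 = 0 -> y *m p^T = 0.
Proof. by move=> H; apply/rowP => i; rewrite ord1 H mxE. Qed.

Hypothesis (t : nat).
Hypothesis H1 : forall c : 'rV[F2]_(u+k), c != 0 -> (t < wt (c *m G))%N.
Hypothesis H2 : forall x : 'rV[F2]_n, x != 0 -> (wt x <= t)%N -> x *m UU^T != 0.

Lemma cG0 (c : 'rV[F2]_(u+k)) : c *m G = 0 -> c = 0.
Proof.
move=> E; apply/eqP; apply/negPn/negP => /H1; rewrite E.
suff -> : wt (0 : 'rV[F2]_n) = 0%N by [].
by rewrite /wt; apply/eqP; rewrite cards_eq0; apply/eqP/setP => j; rewrite !inE mxE eqxx.
Qed.

Lemma inA_row r : row r G \in Asp.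
Proof. by apply/memA; exists (delta_mx 0 r); rewrite -rowE. Qed.

Lemma dd_B (p : 'rV[F2]_n) :
  (forall y, y \in Bsp -> (y *m p^T) 0 0 = 0) -> exists D, p = row_mx D 0 *m G.
Proof.
move=> H.
have : (p <= UU)%MS.
  apply: dd => y yU; apply: dot1; apply: H; by rewrite memB yU.
case/submxP => D ->; exists D.
by rewrite -[in RHS](vsubmxK G) mul_row_col mul0mx addr0.
Qed.

Lemma compl_sub w : in_symp_compl Csp w -> w \in Csp.
Proof.
move=> H; rewrite -(hsubmxK w).
set p := lsubmx w; set q := rsubmx w.
have Hw : w = row_mx p q by rewrite hsubmxK.
apply/memC; exists p, q; split => //.
- have [D ->] : exists D, p = row_mx D 0 *m G.
    apply: dd_B => y By.
    have := H (row_mx 0 y); rewrite Hw symp_row.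
    have -> : ((0 : 'rV[F2]_n) *m q^T) 0 0 = 0 by rewrite mul0mx mxE.
    rewrite sub0r => E; apply/eqP; rewrite -oppr_eq0; apply/eqP; apply: E.
    apply/memC; exists 0, y; split => //; exact: mem0v.
  by apply/memA; eexists.
- rewrite memB; apply/eqP/rowP => j; rewrite !mxE.
  have := H (row_mx (row (lshift k j) G) 0); rewrite Hw symp_row.
  have -> : ((0 : 'rV[F2]_n) *m p^T) 0 0 = 0 by rewrite mul0mx mxE.
  rewrite subr0 mxE => E.
  have E' := E (ltac:(by apply/memC; exists (row (lshift k j) G), 0; split => //; [exact: inA_row| exact: mem0v])).
  rewrite -[RHS]E'; apply: eq_bigr => i _; by rewrite !mxE mulrC.
Qed.

Lemma wt_le_swL (x y : 'rV[F2]_n) : (wt x <= sweight (row_mx x y))%N.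
Proof.
rewrite /wt /sweight; apply: subset_leq_card; apply/fintype.subsetP => i; rewrite !inE row_mxEl => ->; done.
Qed.
Lemma wt_le_swR (x y : 'rV[F2]_n) : (wt y <= sweight (row_mx x y))%N.
Proof.
rewrite /wt /sweight; apply: subset_leq_card; apply/fintype.subsetP => i; rewrite !inE row_mxEr => ->; by rewrite orbT.
Qed.

Lemma weightC v : v \in Csp -> v != 0 -> (t < sweight v)%N.
Proof.
case/memC => x [y [/memA [c ->] By ->]] nz.
case: (eqVneq c 0) => [c0|cn0].
  have yn0 : y != 0.
    by apply: contraNneq nz => ->; rewrite c0 mul0mx row_mx0.
  rewrite memB in By.
  apply: leq_trans (wt_le_swR _ _); rewrite ltnNge; apply/negP => wy.
  by move: (H2 yn0 wy); rewrite By.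
exact: leq_trans (H1 cn0) (wt_le_swL _ _).
Qed.

Hypothesis Hk : (0 < k)%N.

Lemma nonemptyC : exists x, x \in Csp /\ ~ in_symp_compl Csp x.
Proof.
pose r := rshift u (Ordinal Hk).
exists (row_mx (row r G) 0); split.
  by apply/memC; exists (row r G), 0; split => //; [exact: inA_row|exact: mem0v].
move=> Hc.
have [D HD] : exists D, row r G = row_mx D 0 *m G.
  apply: dd_B => y By.
  have := Hc (row_mx 0 y); rewrite symp_row mul0mx mxE sub0r => E.
  apply/eqP; rewrite -oppr_eq0; apply/eqP; apply: E.
  by apply/memC; exists 0, y; split => //; exact: mem0v.
have : (row_mx D 0 - delta_mx 0 r) *m G = 0 by rewrite mulmxBl -rowE HD subrr.
move/cG0/rowP/(_ r); rewrite mxE row_mxEr !mxE eqxx /= sub0r => /eqP.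
by rewrite oppr_eq0 eqxx oner_eq0.
Qed.

Lemma dimA : \dim Asp = (u + k)%N.
Proof.
rewrite limg_dim_eq ?dimvf ?dim_matrix ?mul1n //; last first.
apply/eqP; rewrite -subv0; apply/subvP => c /memv_capP [_].
by rewrite memv_ker lfunE memv0 /= => /eqP /cG0 ->.
exact: mul1n.
Qed.

Lemma dimB : (n - u <= \dim Bsp)%N.
Proof.
have := limg_ker_dim fB fullv; rewrite capfv dimvf dim_matrix => E.
have : (\dim (fB @: fullv) <= 1 * u)%N.
  by have := dimvS (subvf (fB @: fullv)); rewrite dimvf dim_matrix.
rewrite /Bsp; lia.
Qed.

Lemma dimC : (n + k <= \dim Csp)%N.
Proof.
have cap0 : (eL @: Asp :&: eR @: Bsp = 0)%VS.
  apply/eqP; rewrite -subv0; apply/subvP => w /memv_capP [/memv_imgP [x _ ->] /memv_imgP [y _ E]].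
  rewrite eLE eRE in E *; case/eq_row_mx: E => -> _; by rewrite row_mx0 memv0.
have inj (f : 'Hom('rV[F2]_n, 'rV[F2]_(n+n))) (W : {vspace 'rV[F2]_n}) :
    (forall x, f x = 0 -> x = 0) -> \dim (f @: W) = \dim W.
  move=> Hf; apply: limg_dim_eq; apply/eqP; rewrite -subv0; apply/subvP => x /memv_capP [_].
  by rewrite memv_ker memv0 => /eqP /Hf ->.
have := dimv_sum_cap (eL @: Asp) (eR @: Bsp).
rewrite cap0 dimv0 addn0 !inj; first last.
- by move=> x; rewrite eLE -row_mx0 => /eq_row_mx [].
- by move=> x; rewrite eRE -row_mx0 => /eq_row_mx [].
rewrite dimA => ->.
have uln : (u + k <= n)%N.
  have := dimvS (subvf Asp); rewrite dimvf dim_matrix dimA mul1r; lia.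
apply: (leq_trans _ (leq_add (leqnn (u + k)) dimB)); lia.
Qed.
End Code.

Lemma code_of_G n u k t (G : 'M[F2]_(u + k, n)) :
  (0 < k)%N ->
  (forall c : 'rV[F2]_(u+k), c != 0 -> (t < wt (c *m G))%N) ->
  (forall x : 'rV[F2]_n, x != 0 -> (wt x <= t)%N -> x *m (usubmx G)^T != 0) ->
  exists kk d, stabilizer_code_exists n kk d /\ [/\ (k <= kk)%N, (t < d)%N, (kk <= n)%N & (d <= n)%N].
Proof.
move=> Hk H1 H2.
have dC := dimC H1 Hk.
have dC2 : (\dim (Csp G) <= n + n)%N.
  by have := dimvS (subvf (Csp G)); rewrite dimvf dim_matrix mul1r.
have [d [Hd [td dn]]] := @mk_code n (Csp G) (\dim (Csp G) - n) t
  (esym (subnKC (leq_trans (leq_addr k n) dC))) (@compl_sub n u k G) (nonemptyC H1 Hk) (weightC H1 H2).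
exists (\dim (Csp G) - n)%N, d; split; first by exists (Csp G).
split => //.
  by rewrite leq_subRL // (leq_trans (leq_addr k n) dC).
by rewrite leq_subLR.
Qed.

End M_PartA.
Import M_PartA.

Module M_PartB.
Set Implicit Arguments. Unset Strict Implicit. Unset Printing Implicit Defensive.
Local Open Scope ring_scope.

Lemma card_preim (V W : finZmodType) (f : V -> W) :
  {morph f : x y / x + y} -> (forall w, exists v, f v = w) ->
  forall S : {set W}, (#|f @^-1: S| * #|W| = #|S| * #|V|)%N.
Proof.
move=> fD sur.
have f0 : f 0 = 0 by apply: (addIr (f 0)); rewrite -fD !add0r.
have fib : forall w, #|[set v | f v == w]| = #|[set v | f v == 0]|.
  move=> w; have [v0 <-] := sur w.
  rewrite -[RHS](card_imset _ (addIr v0)); apply: eq_card => v; rewrite inE.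
  apply/idP/imsetP => [/eqP E|[x]]; last first.
    by rewrite inE => /eqP fx ->; rewrite fD fx add0r.
  exists (v - v0); last by rewrite addrNK.
  rewrite inE; apply/eqP; apply: (addIr (f v0)); by rewrite -fD addrNK add0r.
have part : forall S : {set W}, #|f @^-1: S| = (#|S| * #|[set v | f v == 0%R]|)%N.
  move=> S; rewrite -sum1_card (partition_big f (mem S)) /=; last by move=> i; rewrite inE.
  rewrite -sum_nat_const; apply: eq_bigr => w wS.
  rewrite -(fib w) -sum1_card; apply: eq_bigl => v; rewrite !inE.
  by apply/andP/eqP => [[_ /eqP]|E] //; split => //; rewrite E.
move=> S; rewrite part.
have := part [set: W]; rewrite cardsT.
have -> : f @^-1: [set: W] = [set: V] by apply/finset.setP => v; rewrite !inE.
rewrite cardsT => E; rewrite -mulnA [X in (_ * X)%N]mulnC -E; done.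
Qed.

Lemma union_bound (I T : finType) (P : I -> T -> bool) (J : pred I) :
  (#|[set x | [exists i, J i && P i x]]| <= \sum_(i | J i) #|[set x | P i x]|)%N.
Proof.
rewrite -sum1_card.
have -> : \sum_(i | J i) #|[set x | P i x]| = \sum_(i | J i) \sum_x (P i x : nat).
  apply: eq_bigr => i _; rewrite -sum1_card big_mkcond /=; apply: eq_bigr => x _.
  by rewrite inE; case: (P i x).
rewrite exchange_big /=.
rewrite [X in (_ <= X)%N](bigID (mem [set x | [exists i, J i && P i x]])) /=.
apply: leq_trans (leq_addr _ _).
apply: leq_sum => x; rewrite inE => /existsP [i /andP [Ji Pi]].
by rewrite (bigD1 i) ?Ji //= Pi.
Qed.

Lemma rv_nz_pick m (c : 'rV[F2]_m) : c != 0 -> exists i, c 0 i = 1.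
Proof.
move=> cn0; case: (pickP (fun i => c 0 i != 0)) => [i ci|H]; first by exists i; exact: F2_nz.
by case/eqP: cn0; apply/rowP => i; rewrite mxE; move: (H i) => /negbFE/eqP.
Qed.

Lemma card_rv m : #|'rV[F2]_m| = (2 ^ m)%N.
Proof. by rewrite card_mx card_Fp // mul1n. Qed.

Lemma exists_G n u k t :
  (2 * (2 ^ (u + k) * #|[set y : 'rV[F2]_n | (wt y <= t)%N]|) < 2 ^ n)%N ->
  (2 * #|[set y : 'rV[F2]_n | (wt y <= t)%N]| < 2 ^ u)%N ->
  exists G : 'M[F2]_(u + k, n),
    (forall c : 'rV[F2]_(u+k), c != 0 -> (t < wt (c *m G))%N) /\
    (forall x : 'rV[F2]_n, x != 0 -> (wt x <= t)%N -> x *m (usubmx G)^T != 0).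
Proof.
set S := [set y : 'rV[F2]_n | (wt y <= t)%N]; move=> h1 h2.
set M := 'M[F2]_(u + k, n).
pose B1 := [set G : M | [exists c : 'rV[F2]_(u+k), (c != 0) && (wt (c *m G) <= t)%N]].
pose B2 := [set G : M | [exists x : 'rV[F2]_n, ((x != 0) && (wt x <= t)%N) && (x *m (usubmx G)^T == 0)]].
have Mpos : (0 < #|M|)%N by apply/card_gt0P; exists 0.
have e1 : forall c : 'rV[F2]_(u+k), c != 0 ->
    (#|[set G : M | (wt (c *m G) <= t)%N]| * 2 ^ n = #|S| * #|M|)%N.
  move=> c cn0; rewrite -card_rv.
  have -> : [set G : M | (wt (c *m G) <= t)%N] = (fun G : M => c *m G) @^-1: S.
    by apply/finset.setP => G; rewrite !inE.
  apply: card_preim; first by move=> G1 G2; rewrite mulmxDr.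
  move=> y; have [i ci] := rv_nz_pick cn0.
  exists (\matrix_(r, j) (if r == i then y 0 j else 0)).
  apply/rowP => j; rewrite !mxE (bigD1 i) //= big1 => [|r ri]; last by rewrite !mxE (negbTE ri) mulr0.
  by rewrite !mxE eqxx ci mul1r addr0.
have e2 : forall x : 'rV[F2]_n, x != 0 ->
    (#|[set G : M | x *m (usubmx G)^T == 0%R]| * 2 ^ u = #|[set (0%R : 'rV[F2]_u)]| * #|M|)%N.
  move=> x xn0; rewrite -card_rv.
  have -> : [set G : M | x *m (usubmx G)^T == 0] = (fun G : M => x *m (usubmx G)^T) @^-1: [set 0].
    by apply/finset.setP => G; rewrite !inE.
  apply: card_preim; first by move=> G1 G2 /=; rewrite -mulmxDr -linearD /= -linearD.
  move=> z; have [j xj] := rv_nz_pick xn0.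
  exists (col_mx (\matrix_(r, l) (if l == j then z 0 r else 0)) 0).
  rewrite col_mxKu.
  apply/rowP => r; rewrite !mxE (bigD1 j) //= big1 => [|l lj]; last by rewrite !mxE (negbTE lj) mulr0.
  by rewrite !mxE eqxx xj mul1r addr0.
have b1 : (#|B1| * 2 ^ n <= 2 ^ (u + k) * #|S| * #|M|)%N.
  have u1 := @union_bound _ M (fun c G => (wt (c *m G) <= t)%N) (fun c => c != 0).
  have u1' : (#|B1| <= \sum_(c : 'rV[F2]_(u+k) | c != 0%R) #|[set G : M | (wt (c *m G) <= t)%N]|)%N := u1.
  apply: leq_trans (leq_mul u1' (leqnn (2 ^ n))) _.
  rewrite big_distrl /=.
  apply: leq_trans (_ : \sum_(c : 'rV[F2]_(u+k) | c != 0%R) (#|S| * #|M|) <= _)%N.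
    by apply: leq_sum => c cn0; rewrite e1.
  rewrite big_mkcond /=.
  apply: leq_trans (_ : \sum_(c : 'rV[F2]_(u+k)) (#|S| * #|M|) <= _)%N.
    by apply: leq_sum => c _; case: ifP.
  by rewrite sum_nat_const card_rv mulnA.
have b2 : (#|B2| * 2 ^ u <= #|S| * #|M|)%N.
  have u2 := @union_bound _ M (fun x G => x *m (usubmx G)^T == 0%R) (fun x => (x != 0%R) && (wt x <= t)%N).
  have u2' : (#|B2| <= \sum_(x : 'rV[F2]_n | (x != 0%R) && (wt x <= t)%N) #|[set G : M | x *m (usubmx G)^T == 0%R]|)%N := u2.
  apply: leq_trans (leq_mul u2' (leqnn (2 ^ u))) _.
  rewrite big_distrl /=.
  apply: leq_trans (_ : \sum_(x : 'rV[F2]_n | (x != 0%R) && (wt x <= t)%N) (#|M|) <= _)%N.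
    by apply: leq_sum => x /andP [xn0 _]; rewrite e2 // cards1 mul1n.
  rewrite sum_nat_const leq_mul2r; apply/orP; right.
  apply: subset_leq_card; apply/fintype.subsetP => x; rewrite !inE => /andP [_ ->]; done.
have c1 : (2 * #|B1| < #|M|)%N.
  rewrite -(ltn_pmul2r (expn_gt0 2 n)) -mulnA.
  apply: leq_ltn_trans (leq_mul (leqnn 2) b1) _.
  by rewrite mulnA [X in (_ < X)%N]mulnC ltn_pmul2r.
have c2 : (2 * #|B2| < #|M|)%N.
  rewrite -(ltn_pmul2r (expn_gt0 2 u)) -mulnA.
  apply: leq_ltn_trans (leq_mul (leqnn 2) b2) _.
  by rewrite mulnA [X in (_ < X)%N]mulnC ltn_pmul2r.
have : (#|B1 :|: B2| < #|M|)%N.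
  apply: leq_ltn_trans (leq_card_setU B1 B2) _; lia.
move=> lt.
have : (0 < #|~: (B1 :|: B2)|)%N.
  move: lt; rewrite -(cardsC (B1 :|: B2)); lia.
case/card_gt0P => G; rewrite !inE negb_or => /andP [nB1 nB2].
exists G; split.
  move=> c cn0; rewrite ltnNge; apply: contra nB1 => wc.
  by apply/existsP; exists c; rewrite cn0 wc.
move=> x xn0 wx; apply: contra nB2 => E.
by apply/existsP; exists x; rewrite xn0 wx E.
Qed.


End M_PartB.
Import M_PartB.

Module M_PartC.
Set Implicit Arguments. Unset Strict Implicit. Unset Printing Implicit Defensive.

Definition supp n (y : 'rV[F2]_n) : {set 'I_n} := [set j | y 0%R j != 0%R].

Lemma supp_inj n : injective (@supp n).
Proof.
move=> y y' E; apply/rowP => j.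
have := congr1 (fun S : {set 'I_n} => j \in S) E; rewrite /supp !inE.
by case: (F2_cases (y 0%R j)) => ->; case: (F2_cases (y' 0%R j)) => -> //=; rewrite oner_eq0.
Qed.

Lemma card_wt_le n t :
  #|[set y : 'rV[F2]_n | wt y <= t]| = #|[set S : {set 'I_n} | #|S| <= t]|.
Proof.
rewrite -(card_imset _ (@supp_inj n)); apply: eq_card => S; rewrite inE.
apply/imsetP/idP => [[y]|St]; first by rewrite inE => wy ->.
exists (\row_j ((j \in S)%:R : F2))%R; last first.
  apply/finset.setP => j; rewrite /supp !inE mxE; case: (j \in S) => //=.
rewrite inE /wt; apply: leq_trans St; apply: subset_leq_card.
apply/fintype.subsetP => j; rewrite !inE mxE; by case: (j \in S).
Qed.

Lemma card_sets_le n t :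
  #|[set S : {set 'I_n} | #|S| <= t]| = \sum_(0 <= i < t.+1) 'C(n, i).
Proof.
elim: t => [|t IH].
  rewrite big_nat1 bin0 -(cards1 (finset.set0 : {set 'I_n})); apply: eq_card => S.
  by rewrite !inE leqn0 cards_eq0.
have Cd := card_draws 'I_n t.+1; rewrite card_ord in Cd.
rewrite big_nat_recr //= -IH -Cd.
transitivity (#|[set S : {set 'I_n} | #|S| <= t] :|: [set S : {set 'I_n} | #|S| == t.+1]|).
  by apply: eq_card => S; rewrite !inE leq_eqVlt ltnS orbC.
rewrite cardsU.
have -> : [set S : {set 'I_n} | #|S| <= t] :&: [set S : {set 'I_n} | #|S| == t.+1] = finset.set0.
  apply/finset.setP => S; rewrite !inE; apply/negbTE; apply/negP => /andP [H /eqP E].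
  by rewrite E ltnn in H.
rewrite cards0 subn0; congr (_ + _); apply: eq_card => S; by rewrite !inE.
Qed.

Lemma my_chernoff n t q : 0 < q -> t <= n ->
  #|[set y : 'rV[F2]_n | wt y <= t]| * q ^ (n - t) <= (q + 1) ^ n.
Proof.
move=> q0 tn; rewrite card_wt_le card_sets_le expnDn big_distrl /=.
rewrite -(big_mkord xpredT (fun i => 'C(n, i) * (q ^ (n - i) * 1 ^ i))).
rewrite [X in _ <= X](big_cat_nat _ (n := t.+1)) //=.
apply: (leq_trans _ (leq_addr _ _)).
rewrite !big_nat; apply: leq_sum => i /andP [_ it].
rewrite exp1n muln1 leq_mul2l; apply/orP; right.
by apply: leq_pexp2l => //; apply: leq_sub2l.
Qed.

End M_PartC.
Import M_PartC.

Module M_PartD1.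
Set Implicit Arguments. Unset Strict Implicit. Unset Printing Implicit Defensive.

Lemma per_n n t :
  (2 * (trunc_log 2 #|[set y : 'rV[F2]_n | wt y <= t]|).+1 + 3 <= n)%N ->
  exists kk d, stabilizer_code_exists n kk d /\
    [/\ (n - 2 * (trunc_log 2 #|[set y : 'rV[F2]_n | wt y <= t]|).+1 - 2 <= kk)%N,
        (t < d)%N, (kk <= n)%N & (d <= n)%N].
Proof.
set V := #|[set y : 'rV[F2]_n | wt y <= t]|.
set L := (trunc_log 2 V).+1 => hn.
have VL : (V < 2 ^ L)%N by apply: trunc_log_ltn.
pose u := L.+1.
pose k := (n - 2 * L - 2)%N.
have k0 : (0 < k)%N by rewrite /k; lia.
have ukn : (u + k + L + 1 = n)%N by rewrite /u /k; lia.
have h1 : (2 * (2 ^ (u + k) * V) < 2 ^ n)%N.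
  have E : (2 ^ n = 2 ^ (u + k) * 2 ^ L * 2)%N by rewrite -ukn !expnD expn1.
  rewrite E.
  have P0 : (0 < 2 ^ (u + k))%N by rewrite expn_gt0.
  move: P0 VL; set P := (2 ^ (u + k))%N; set Q := (2 ^ L)%N; nia.
have h2 : (2 * V < 2 ^ u)%N by rewrite /u expnS ltn_pmul2l.
have [G [H1 H2]] := exists_G h1 h2.
have [kk [d [Hc [kkk td kkn dn]]]] := code_of_G k0 H1 H2.
by exists kk, d; split.
Qed.

End M_PartD1.
Import M_PartD1.

Module M_PartD2.
Set Implicit Arguments. Unset Strict Implicit. Unset Printing Implicit Defensive.
Local Open Scope ring_scope.

Lemma expR13 (R : realType) : expR (3^-1 : R) <= 3 / 2.
Proof.
have h := expR_ge1Dx (- 3^-1 : R).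
rewrite expRN in h.
have p := expR_gt0 (3^-1 : R).
have e : (1 - 3^-1 : R) = 2 / 3 by field.
rewrite e in h.
rewrite -[expR _]invrK -[3 / 2 : R]invrK.
rewrite lef_pV2 ?posrE ?invr_gt0 //; last by lra.
Qed.

Lemma pow2_ge_expR (R : realType) (j : nat) : expR ((j%:R : R) / 3) <= 2 ^+ j.
Proof.
rewrite mulrC expRM_natr.
apply: le_trans (lerXn2r j _ _ (expR13 R) ) _.
- by rewrite nnegrE expR_ge0.
- by rewrite nnegrE; lra.
apply: lerXn2r; rewrite ?nnegrE; lra.
Qed.

Lemma L_bound (R : realType) (m n t Lp : nat) :
  (2 ^ Lp * (4 ^ m) ^ (n - t) <= (4 ^ m + 1) ^ n)%N -> (t <= n)%N ->
  (Lp%:R : R) <= (2 * m * t)%:R + 3 * n%:R / (4 ^ m)%:R.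
Proof.
move=> H tn.
have q0 : (0 < 4 ^ m)%N by rewrite expn_gt0.
have qR : (0 : R) < (4 ^ m)%:R by rewrite ltr0n.
have nn : (0 : R) <= 3 * n%:R / (4 ^ m)%:R.
  by apply: divr_ge0; [apply: mulr_ge0 => //; lra | exact: ltW].
case: (leqP Lp (2 * m * t)) => h.
  apply: le_trans (_ : ((2 * m * t)%:R : R) <= _); first by rewrite ler_nat.
  by rewrite lerDl.
set j := (Lp - 2 * m * t)%N.
have LE : Lp = (2 * m * t + j)%N by rewrite /j; lia.
have Hj : (2 ^ j * (4 ^ m) ^ n <= (4 ^ m + 1) ^ n)%N.
  move: H; rewrite LE expnD.
  have -> : (2 ^ (2 * m * t) = (4 ^ m) ^ t)%N.
    by rewrite -!expnM -mulnA (expnM 2 2).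

  by rewrite [(_ ^ t * _)%N]mulnC -mulnA -expnD subnKC.
have HjR : (2 : R) ^+ j * ((4 ^ m)%:R) ^+ n <= ((4 ^ m)%:R + 1) ^+ n.
  move: Hj; rewrite -(ler_nat R) natrM.
  rewrite [X in X * _ <= _]natrX [X in _ * X <= _]natrX [X in _ <= X]natrX natrD //.
set q : R := (4 ^ m)%:R.
have h2 : (2 : R) ^+ j <= expR (n%:R / q).
  have : (2 : R) ^+ j <= ((q + 1) / q) ^+ n.
    rewrite expr_div_n ler_pdivlMr ?exprn_gt0 //.
  move/le_trans; apply.
  rewrite [X in expR X]mulrC expRM_natr.
  apply: lerXn2r; rewrite ?nnegrE ?expR_ge0 //.
    by apply: divr_ge0; [lra| exact: ltW].
  have -> : (q + 1) / q = 1 + q^-1 by field; lra.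
  exact: expR_ge1Dx.
have h3 : (j%:R : R) / 3 <= n%:R / q.
  rewrite -ler_expR; exact: le_trans (pow2_ge_expR R j) h2.
rewrite LE natrD lerD2l.
have : (j%:R : R) <= 3 * (n%:R / q) by lra.
by rewrite mulrA.
Qed.

End M_PartD2.
Import M_PartD2.

Module M_PartE1.
Set Implicit Arguments. Unset Strict Implicit. Unset Printing Implicit Defensive.
Local Open Scope classical_set_scope.
Local Open Scope ring_scope.

Lemma liminf_ge (R : realType) (u : nat -> R) (r : R) :
  (forall i, 0 <= u i <= 1) -> (forall i, r <= u i) -> r <= limn_inf u.
Proof.
move=> b lb.
have bu : bounded_fun u.
  rewrite /bounded_near; near=> M => x _ /=.
  apply: le_trans (_ : `|u x| <= 1) _.
    by have /andP [h1 h2] := b x; rewrite ger0_norm.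
  near: M; exact: nbhs_pinfty_ge.
rewrite limn_infE //.
have i0 : r <= infs u 0.
  rewrite /infs /=; apply: lb_le_inf.
    by exists (u 0%N); exists 0%N.
  by move=> _ [k _ <-].
apply: le_trans i0 _.
apply: sup_upper_bound; last by exists 0%N.
split; first by exists (infs u 0%N); exists 0%N.
exists 1 => _ [k _ <-].
rewrite /infs /=.
apply: le_trans (_ : inf (sdrop u k) <= u k) _; last by have /andP [] := b k.
apply: ge_inf; first by exists 0 => _ [j _ <-]; have /andP [] := b j.
by exists k => /=.
Unshelve. all: by end_near.
Qed.

End M_PartE1.
Import M_PartE1.

Module M_PartE2.
Set Implicit Arguments. Unset Strict Implicit. Unset Printing Implicit Defensive.
Local Open Scope ring_scope.

Lemma wt0 n : wt (0 : 'rV[F2]_n) = 0%N.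
Proof.
by rewrite /wt; apply/eqP; rewrite cards_eq0; apply/eqP/finset.setP => j; rewrite !inE mxE eqxx.
Qed.

Lemma per_index (R : realType) (m : nat) (delta : R) (n : nat) :
  (2 <= m)%N -> 0 <= delta ->
  delta <= (4 * m%:R)^-1 * (1 - 2 / (2 ^+ m - 1)) ->
  (5 : R) < n%:R * (2 / (2 ^+ m - 1) - 6 / (4 ^ m)%:R) ->
  exists kk d, stabilizer_code_exists n kk d /\
    [/\ 1 - 2 / (2 ^+ m - 1) - 4 * m%:R * delta <= kk%:R / n%:R,
        delta <= d%:R / n%:R, (kk <= n)%N & (d <= n)%N].
Proof.
move=> m2 d0 dle hn.
set p : R := 2 ^+ m.
set q : R := (4 ^ m)%:R.
have p4 : 4 <= p.
  rewrite /p; have -> : (4 : R) = 2 ^+ 2 by rewrite expr2; lra.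
  by apply: ler_weXn2l => //; lra.
have qp : q = p * p.
  by rewrite /q /p natrX -exprMn (_ : (2 * 2 : R) = 4) //; lra.
have q0 : 0 < q by rewrite qp; nra.
set c : R := 1 - 2 / (p - 1).
have m0 : (0 : R) < m%:R by rewrite ltr0n; lia.
have hd : 4 * m%:R * delta <= c.
  move: dle; rewrite -/p -/c => dle.
  have : 4 * m%:R * delta <= 4 * m%:R * ((4 * m%:R)^-1 * c) by rewrite ler_pM2l //; lra.
  by rewrite mulrA mulfV ?mul1r //; lra.
set X : R := n%:R.
have X0 : 0 <= X by rewrite /X ler0n.
set t := Num.truncn (delta * X).
have tX : (t%:R : R) <= delta * X by rewrite truncn_le mulr_ge0.
have tX' : delta * X < t.+1%:R by apply: truncnS_gt.
have c1 : c <= 1.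
  have : 0 <= 2 / (p - 1) by apply: divr_ge0; lra.
  rewrite /c; lra.
set a : R := 2 / (p - 1).
set b : R := 6 / q.
have hn' : 5 < X * a - X * b by move: hn; rewrite -/p -/q -/a -/b mulrBr.
have dl1 : delta <= 1.
  have m2R : (2 : R) <= m%:R by rewrite (ler_nat R 2 m).
  nra.
have tn : (t <= n)%N.
  rewrite -(ler_nat R); apply: le_trans tX _; rewrite -/X; nra.
set V := #|[set y : 'rV[F2]_n | (wt y <= t)%N]|.
have V0 : (0 < V)%N.
  by apply/card_gt0P; exists (0 : 'rV[F2]_n); rewrite inE wt0.
set Lp := trunc_log 2 V.
have h2L : (2 ^ Lp <= V)%N := trunc_logP (ltnSn 1) V0.
have ch := @my_chernoff n t (4 ^ m)%N (expn_gt0 4 m) tn.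
have hL := L_bound R (leq_trans (leq_mul h2L (leqnn _)) ch) tn.
rewrite -/q -/X natrM natrM in hL.
have mt : m%:R * t%:R <= m%:R * (delta * X) by rewrite ler_pM2l.
have e3 : 3 * X / q = X * b / 2 by rewrite /b; field; lra.
have hdX : 4 * m%:R * delta * X <= c * X by apply: ler_wpM2r.
have cE : c * X = X - X * a by rewrite /c /a; ring.
have LpR : (Lp%:R : R) * 2 + 5 < X.
  rewrite e3 in hL; rewrite cE in hdX; clear -hL mt hdX hn'; nra.
have cond : (2 * Lp.+1 + 3 <= n)%N.
  rewrite -(ler_nat R) natrD natrM -addn1 natrD; rewrite -/X; lra.
have [kk [d [Hc [kb td kn dn]]]] := per_n cond.
have X0' : 0 < X by have := ler0n R Lp; lra.
have kb' : (n <= kk + 2 * Lp + 4)%N.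
  move: kb cond; rewrite -/V -/Lp; clear; lia.
move: kb'; rewrite -(ler_nat R) !natrD ?natrM -/X => kb'.
have td' : delta * X < d%:R.
  apply: lt_le_trans tX' _; rewrite ler_nat; exact: td.
exists kk, d; split => //; split => //.
- rewrite ler_pdivlMr // -/X -/p -/a !mulrBl mul1r.
  rewrite e3 in hL.
  rewrite -/a; clear -kb' hL mt hn'.
  lra.
- by rewrite ler_pdivlMr //; lra.
Qed.

End M_PartE2.
Import M_PartE2.

Unset Implicit Arguments. Set Strict Implicit. Set Printing Implicit Defensive.
Local Open Scope classical_set_scope.
Local Open Scope ring_scope.

Theorem proposition4 (R : realType) (m : nat) (delta : R) :
  (2 <= m)%N ->
  0 <= delta ->
  delta <= (4 * m%:R)^-1 * (1 - 2 / (2 ^+ m - 1)) ->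
  exists (n k d : nat -> nat),
    (forall i, stabilizer_code_exists (n i) (k i) (d i)) /\
    ((n i)%:R : R) @[i --> \oo] --> +oo /\
    1 - 2 / (2 ^+ m - 1) - 4 * m%:R * delta
      <= limn_inf (fun i => (k i)%:R / (n i)%:R : R) /\
    delta <= limn_inf (fun i => (d i)%:R / (n i)%:R : R).
Proof.
move=> m2 d0 dle.
set s : R := 2 / (2 ^+ m - 1) - 6 / (4 ^ m)%:R.
have s0 : 0 < s.
  set p : R := 2 ^+ m.
  have p4 : 4 <= p.
    rewrite /p; have -> : (4 : R) = 2 ^+ 2 by rewrite expr2; lra.
    by apply: ler_weXn2l => //; lra.
  have qp : ((4 ^ m)%:R : R) = p * p.
    by rewrite /p natrX -exprMn (_ : (2 * 2 : R) = 4) //; lra.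
  rewrite /s -/p qp subr_gt0 ltr_pdivrMr; last by nra.
  rewrite mulrAC ltr_pdivlMr; last by lra.
  nra.
set N0 := (Num.truncn (5 / s)).+1.
have hN : forall i, (5 : R) < (i + N0)%N%:R * s.
  move=> i; rewrite -ltr_pdivrMr //.
  apply: lt_le_trans (truncnS_gt (5 / s)) _.
  by rewrite ler_nat /N0 leq_addl.
have ex : forall i, exists kd : nat * nat,
    stabilizer_code_exists (i + N0) kd.1 kd.2 /\
    [/\ 1 - 2 / (2 ^+ m - 1) - 4 * m%:R * delta <= kd.1%:R / (i + N0)%N%:R,
        delta <= kd.2%:R / (i + N0)%N%:R, (kd.1 <= i + N0)%N & (kd.2 <= i + N0)%N].
  move=> i; have [kk [d H]] := per_index m2 d0 dle (hN i).
  by exists (kk, d).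
have [f Hf] := choice ex.
exists (fun i => (i + N0)%N), (fun i => (f i).1), (fun i => (f i).2).
have npos : forall i, (0 : R) < (i + N0)%N%:R by move=> i; rewrite ltr0n addn_gt0 orbT.
split; first by move=> i; have [] := Hf i.
split.
  apply/cvgrnyP; apply/cvgnyPge => A.
  by exists A => // i /= Ai; apply: leq_trans Ai (leq_addr _ _).
split.
  apply: liminf_ge => i; have [_ [h1 h2 h3 h4]] := Hf i => //.
  rewrite divr_ge0 //= ler_pdivrMr // mul1r ler_nat //.
apply: liminf_ge => i; have [_ [h1 h2 h3 h4]] := Hf i => //.
rewrite divr_ge0 //= ler_pdivrMr // mul1r ler_nat //.
Qed.
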